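(* A Leibniz algebra $A$ over $k$ has an actor (in the category of Leibniz algebras) if and only if $A$ satisfies Condition 1. If this is the case, then $\mathfrak{B}(A)=\mathrm{Actor}(A)$.
   Context: $k$ is a commutative ring with unit. A Leibniz algebra is a $k$-module $L$ with a bilinear bracket satisfying $[x,[y,z]]=[[x,y],z]-[[x,z],y]$. An action of a Leibniz algebra $B$ on a Leibniz algebra $A$ is a pair of bilinear maps $B\times A\to A$, $(b,a)\mapsto[b,a]$, and $A\times B\to A$, $(a,b)\mapsto[a,b]$, such that for all $a,a_1,a_2\in A$, $b,b_1,b_2\in B$: $[a_1,[a_2,b]]=[[a_1,a_2],b]-[[a_1,b],a_2]$; $[a_1,[b,a_2]]=[[a_1,b],a_2]-[[a_1,a_2],b]$; $[b,[a_1,a_2]]=[[b,a_1],a_2]-[[b,a_2],a_1]$; $[a,[b_1,b_2]]=[[a,b_1],b_2]-[[a,b_2],b_1]$; $[b_1,[a,b_2]]=[[b_1,a],b_2]-[[b_1,b_2],a]$; $[b_1,[b_2,a]]=[[b_1,b_2],a]-[[b_1,a],b_2]$. A crossed module of Leibniz algebras is a Leibniz algebra homomorphism $\partial:A\to G$ together with an action of $G$ on $A$ such that $\partial[g,a]=[g,\partial a]$, $\partial[a,g]=[\partial a,g]$, $[\partial a,a']=[a,a']$ and $[a',\partial a]=[a',a]$ for all $g\in G$, $a,a'\in A$. An actor of $A$ is a crossed module $\partial:A\to\mathrm{Actor}(A)$ such that for every Leibniz algebra $C$ with an action on $A$ there is a unique Leibniz algebra homomorphism $\varphi:C\to\mathrm{Actor}(A)$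 with $[\varphi(c),a]=[c,a]$ and $[a,\varphi(c)]=[a,c]$ for all $c\in C$, $a\in A$. Condition 1: for any two Leibniz algebras $B,C$ acting on $A$, $[c,[a,b]]=-[c,[b,a]]$ for all $a\in A$, $b\in B$, $c\in C$. Construction of $\mathfrak{B}(A)$: let $(B_j)_{j\in J}$ range over all Leibniz algebras equipped with an action on $A$ (one index per action). For $b\in B_j$ let $\mathbf b$ be the pair of $k$-linear maps $A\to A$, $a\mapsto[a,\mathbf b]:=[a,b]$ and $a\mapsto[\mathbf b,a]:=[b,a]$. On pairs $x=([-,x],[x,-])$ of $k$-linear maps $A\to A$ define addition and scalar multiplication componentwise and the bracket $[x,y]$ by $[a,[x,y]]=[[a,x],y]-[[a,y],x]$, $[[x,y],a]=[x,[y,a]]+[[x,a],y]$ (Definition 4.1; under Condition 1 this agrees with the alternative Definition 4.2, $[[x,y],a]=-[x,[a,y]]+[[x,a],y]$). $\mathfrak{B}(A)$ is the set of pairs obtained from all the $\mathbf b$ by iterating these operations; it acts on $A$ via its two maps, and $A\to\mathfrak{B}(A)$ sends $a$ to the pair $([-,a],[a,-])$. *)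

(* Defs.v *)
From mathcomp Require Import all_boot all_algebra.
Set Implicit Arguments.
Unset Strict Implicit.
Unset Printing Implicit Defensive.
Import GRing.Theory.
Local Open Scope ring_scope.

Record leibAlg (k : comPzRingType) := LeibAlg {
  lcar :> lmodType k;
  lbr : lcar -> lcar -> lcar;
  lbr_linl : forall (c : k) (x y z : lcar),
      lbr (c *: x + y) z = c *: lbr x z + lbr y z;
  lbr_linr : forall (c : k) (x y z : lcar),
      lbr z (c *: x + y) = c *: lbr z x + lbr z y;
  lbr_leibniz : forall x y z : lcar,
      lbr x (lbr y z) = lbr (lbr x y) z - lbr (lbr x z) y
}.
Arguments lbr {k} l _ _.

Section Defs.
Variable k : comPzRingType.

Definition bilinear_map (U V W : lmodType k) (f : U -> V -> W) : Prop :=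
  (forall (c : k) (x y : U) (z : V), f (c *: x + y) z = c *: f x z + f y z) /\
  (forall (c : k) (x : U) (y z : V), f x (c *: y + z) = c *: f x y + f x z).

(** An action of [B] on [A]: [lact b a] is [[b,a]], [ract a b] is [[a,b]]. *)
Definition is_action (B A : leibAlg k)
    (lact : B -> A -> A) (ract : A -> B -> A) : Prop :=
  [/\ bilinear_map lact, bilinear_map ract,
   (forall (a1 a2 : A) (b : B),
      lbr A a1 (ract a2 b) = ract (lbr A a1 a2) b - lbr A (ract a1 b) a2),
   (forall (a1 a2 : A) (b : B),
      lbr A a1 (lact b a2) = lbr A (ract a1 b) a2 - ract (lbr A a1 a2) b) &
   [/\ (forall (b : B) (a1 a2 : A),
      lact b (lbr A a1 a2) = lbr A (lact b a1) a2 - lbr A (lact b a2) a1),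
      (forall (a : A) (b1 b2 : B),
        ract a (lbr B b1 b2) = ract (ract a b1) b2 - ract (ract a b2) b1),
      (forall (b1 b2 : B) (a : A),
        lact b1 (ract a b2) = ract (lact b1 a) b2 - lact (lbr B b1 b2) a) &
      (forall (b1 b2 : B) (a : A),
        lact b1 (lact b2 a) = lact (lbr B b1 b2) a - ract (lact b1 a) b2)]].

Definition is_leib_hom (L M : leibAlg k) (f : L -> M) : Prop :=
  (forall (c : k) (x y : L), f (c *: x + y) = c *: f x + f y) /\
  (forall x y : L, f (lbr L x y) = lbr M (f x) (f y)).

Definition is_crossed_module (A G : leibAlg k)
    (lG : G -> A -> A) (rG : A -> G -> A) (d : A -> G) : Prop :=
  [/\ is_leib_hom d, is_action lG rG,
   (forall (g : G) (a : A), d (lG g a) = lbr G g (d a)) &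
   [/\
   (forall (g : G) (a : A), d (rG a g) = lbr G (d a) g),
    (forall a a' : A, lG (d a) a' = lbr A a a') &
   (forall a a' : A, rG a' (d a) = lbr A a' a)]].

Definition is_actor (A G : leibAlg k)
    (lG : G -> A -> A) (rG : A -> G -> A) (d : A -> G) : Prop :=
  is_crossed_module lG rG d /\
  forall (C : leibAlg k) (lC : C -> A -> A) (rC : A -> C -> A),
    is_action lC rC ->
    exists phi : C -> G,
      [/\ is_leib_hom phi,
          (forall (c : C) (a : A), lG (phi c) a = lC c a),
          (forall (c : C) (a : A), rG a (phi c) = rC a c) &
          (forall psi : C -> G,
             is_leib_hom psi ->
             (forall (c : C) (a : A), lG (psi c) a = lC c a) ->
             (forall (c : C) (a : A), rG a (psi c) = rC a c) ->
             forall c, psi c = phi c)].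

Definition has_actor (A : leibAlg k) : Prop :=
  exists (G : leibAlg k) (lG : G -> A -> A) (rG : A -> G -> A) (d : A -> G),
    is_actor lG rG d.

Definition condition1 (A : leibAlg k) : Prop :=
  forall (B C : leibAlg k) (lB : B -> A -> A) (rB : A -> B -> A)
         (lC : C -> A -> A) (rC : A -> C -> A),
    is_action lB rB -> is_action lC rC ->
    forall (a : A) (b : B) (c : C), lC c (rB a b) = - lC c (lB b a).

(** Pairs [x = ([-,x], [x,-])] of maps [A -> A]: the first component is
    [a |-> [a,x]], the second is [a |-> [x,a]]. *)
Definition pairA (A : leibAlg k) : Type := ((A -> A) * (A -> A))%type.

Definition pair_add (A : leibAlg k) (x y : pairA A) : pairA A :=
  (fun a => x.1 a + y.1 a, fun a => x.2 a + y.2 a).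

Definition pair_scale (A : leibAlg k) (c : k) (x : pairA A) : pairA A :=
  (fun a => c *: x.1 a, fun a => c *: x.2 a).

(** Definition 4.1: [a,[x,y]] = [[a,x],y] - [[a,y],x] and
    [[x,y],a] = [x,[y,a]] + [[x,a],y]. *)
Definition pair_br (A : leibAlg k) (x y : pairA A) : pairA A :=
  (fun a => y.1 (x.1 a) - x.1 (y.1 a), fun a => x.2 (y.2 a) + y.1 (x.2 a)).

Definition bold (A B : leibAlg k) (lB : B -> A -> A) (rB : A -> B -> A)
    (b : B) : pairA A := (fun a => rB a b, fun a => lB b a).

Inductive inBA (A : leibAlg k) : pairA A -> Prop :=
  | inBA_gen (B : leibAlg k) (lB : B -> A -> A) (rB : A -> B -> A) (b : B) :
      is_action lB rB -> inBA (bold lB rB b)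
  | inBA_add x y : inBA x -> inBA y -> inBA (pair_add x y)
  | inBA_scale (c : k) x : inBA x -> inBA (pair_scale c x)
  | inBA_br x y : inBA x -> inBA y -> inBA (pair_br x y).

(** "B(A) = Actor(A)": the canonical map [g |-> ([-,g],[g,-])] from the actor
    to pairs of maps is an isomorphism of Leibniz algebras onto B(A),
    compatible with the actions and with the crossed-module maps. *)
Definition actor_is_BA (A G : leibAlg k)
    (lG : G -> A -> A) (rG : A -> G -> A) (d : A -> G) : Prop :=
  let iota := bold lG rG in
  [/\ injective iota,
      (forall x : pairA A, inBA x <-> exists g : G, iota g = x),
      (forall (c : k) (g h : G),
          iota (c *: g + h) = pair_add (pair_scale c (iota g)) (iota h)),
      (forall g h : G, iota (lbr G g h) = pair_br (iota g) (iota h)) &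
      (forall a : A, iota (d a) = (fun a' => lbr A a' a, fun a' => lbr A a a'))].

End Defs.

(* Main.v *)
From HB Require Import structures.
Require Import Defs.
From mathcomp Require Import all_boot all_algebra.
From mathcomp Require Import ring.
From mathcomp Require Import boolp.
From Stdlib Require Import ProofIrrelevance.
Set Implicit Arguments.
Unset Strict Implicit.
Unset Printing Implicit Defensive.
Import GRing.Theory.
Local Open Scope ring_scope.

(* Dual numbers k + V, used only to let [ring] decide zmodule identities. *)
Section Dual.
Variables (k : comPzRingType) (V : lmodType k).
Definition dual := (k * V)%type.
HB.instance Definition _ := GRing.Zmodule.on dual.
Definition dmul (x y : dual) : dual := (x.1 * y.1, x.1 *: y.2 + y.1 *: x.2).
Definition done_ : dual := (1, 0).
Lemma dmulA : associative dmul.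
Proof. move=> [a u] [b v] [c w]; rewrite /dmul /=; congr pair; first by rewrite mulrA.
rewrite !scalerDr !scalerA addrA [c * a]mulrC [b * c]mulrC; congr (_ + _). Qed.
Lemma dmulC : commutative dmul.
Proof. move=> [a u] [b v]; rewrite /dmul /= mulrC addrC //. Qed.
Lemma dmul1 : left_id done_ dmul.
Proof. move=> [a u]; rewrite /dmul /= mul1r scale1r scaler0 addr0 //. Qed.
Lemma dmulDl : left_distributive dmul +%R.
Proof. move=> [a u] [b v] [c w]; rewrite /dmul /=. congr pair; first by rewrite mulrDl.
rewrite scalerDl scalerDr -!addrA; congr (_ + _); rewrite addrC -!addrA; congr (_ + _); rewrite addrC //. Qed.
HB.instance Definition _ := GRing.Zmodule_isComPzRing.Build dual dmulA dmulC dmul1 dmulDl.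
Definition inj (v : V) : dual := (0, v).
Lemma injD u v : inj (u + v) = inj u + inj v. Proof. by rewrite /inj; congr pair; rewrite addr0. Qed.
Lemma injN u : inj (- u) = - inj u. Proof. by rewrite /inj; congr pair; rewrite oppr0. Qed.
Lemma inj0 : inj 0 = 0. Proof. by []. Qed.
Lemma injZ (c : k) u : inj (c *: u) = ((c, 0) : dual) * inj u.
Proof. by rewrite /inj /GRing.mul /= /dmul /= mulr0 scaler0 addr0. Qed.
Lemma inj_inj : injective inj. Proof. by move=> u v []. Qed.
End Dual.

Ltac zring := apply: inj_inj; rewrite ?(injD, injN, injZ, inj0); ring.
Section Main.
Variables (k : comPzRingType) (A : leibAlg k).
Local Notation br := (lbr A).

Definition lin (f : A -> A) := forall (c : k) (u v : A), f (c *: u + v) = c *: f u + f v.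
Lemma lin0 f : lin f -> f 0 = 0.
Proof. by move=> H; have := H (-1) 0 0; rewrite scaler0 addr0 scaleN1r addNr. Qed.
Lemma linD f u v : lin f -> f (u + v) = f u + f v.
Proof. by move=> H; have := H 1 u v; rewrite !scale1r. Qed.
Lemma linZ f c u : lin f -> f (c *: u) = c *: f u.
Proof. by move=> H; have := H c u 0; rewrite !addr0 (lin0 H) addr0. Qed.
Lemma linN f u : lin f -> f (- u) = - f u.
Proof. by move=> H; rewrite -scaleN1r (linZ _ _ H) scaleN1r. Qed.
Lemma linB f u v : lin f -> f (u - v) = f u - f v.
Proof. by move=> H; rewrite (linD _ _ H) (linN _ H). Qed.

Lemma linbr_r z : lin (br z). Proof. move=> c x y; exact: (@lbr_linr k A c x y z). Qed.
Lemma linbr_l z : lin (br^~ z). Proof. move=> c x y; exact: (@lbr_linl k A c x y z). Qed.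
Lemma brDl u v w : br (u + v) w = br u w + br v w. Proof. exact: (linD _ _ (linbr_l w)). Qed.
Lemma brDr u v w : br w (u + v) = br w u + br w v. Proof. exact: (linD _ _ (linbr_r w)). Qed.
Lemma brNl u w : br (- u) w = - br u w. Proof. exact: (linN _ (linbr_l w)). Qed.
Lemma brNr u w : br w (- u) = - br w u. Proof. exact: (linN _ (linbr_r w)). Qed.
Lemma brZl c u w : br (c *: u) w = c *: br u w. Proof. exact: (linZ _ _ (linbr_l w)). Qed.
Lemma brZr c u w : br w (c *: u) = c *: br w u. Proof. exact: (linZ _ _ (linbr_r w)). Qed.
Lemma br0l w : br 0 w = 0. Proof. exact: (lin0 (linbr_l w)). Qed.
Lemma br0r w : br w 0 = 0. Proof. exact: (lin0 (linbr_r w)). Qed.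
Lemma brL x y z : br x (br y z) = br (br x y) z - br (br x z) y.
Proof. exact: lbr_leibniz. Qed.

Record Qp (x : pairA A) : Prop := {
  Q1l : lin x.1; Q2l : lin x.2;
  Q1 : forall a1 a2, br a1 (x.1 a2) = x.1 (br a1 a2) - br (x.1 a1) a2;
  Qann : forall u a, br u (x.2 a) = - br u (x.1 a);
  Q3 : forall a1 a2, x.2 (br a1 a2) = br (x.2 a1) a2 - br (x.2 a2) a1 }.

Lemma Q1' x : Qp x -> forall a1 a2, x.1 (br a1 a2) = br (x.1 a1) a2 + br a1 (x.1 a2).
Proof. move=> H a1 a2; rewrite (Q1 H); zring. Qed.
Lemma Q2 x : Qp x -> forall a1 a2, br a1 (x.2 a2) = br (x.1 a1) a2 - x.1 (br a1 a2).
Proof. move=> H a1 a2; rewrite (Qann H) (Q1' H); zring. Qed.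

Lemma Q_gen (B : leibAlg k) (lB : B -> A -> A) rB b :
  is_action lB rB -> Qp (bold lB rB b).
Proof.
case=> [[bl1 bl2] [br1 br2] ax1 ax2 [ax3 _ _ _]]; split => /=.
- by move=> c u v; rewrite br1.
- by move=> c u v; rewrite bl2.
- by move=> a1 a2; rewrite ax1.
- by move=> u a; rewrite ax2 ax1; zring.
- by move=> a1 a2; rewrite ax3.
Qed.

Lemma Q_add x y : Qp x -> Qp y -> Qp (pair_add x y).
Proof.
move=> Hx Hy; split => /=.
- by move=> c u v; rewrite (Q1l Hx) (Q1l Hy); zring.
- by move=> c u v; rewrite (Q2l Hx) (Q2l Hy); zring.
- by move=> a1 a2; rewrite !(brDr, brDl) (Q1 Hx) (Q1 Hy); zring.
- by move=> u a; rewrite !(brDr, brDl) (Qann Hx) (Qann Hy); zring.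
- by move=> a1 a2; rewrite !(brDr, brDl) (Q3 Hx) (Q3 Hy); zring.
Qed.

Lemma Q_scale c x : Qp x -> Qp (pair_scale c x).
Proof.
move=> Hx; split => /=.
- by move=> d u v; rewrite (Q1l Hx); zring.
- by move=> d u v; rewrite (Q2l Hx); zring.
- by move=> a1 a2; rewrite !(brZr, brZl) (Q1 Hx); zring.
- by move=> u a; rewrite !(brZr, brZl) (Qann Hx); zring.
- by move=> a1 a2; rewrite !(brZr, brZl) (Q3 Hx); zring.
Qed.

Lemma Lann2 x y : Qp x -> Qp y -> forall u a,
  br u (y.1 (x.2 a)) = - br u (y.1 (x.1 a)).
Proof.
move=> Hx Hy u a.
have h1 : br u (x.2 a + x.1 a) = 0 by rewrite brDr (Qann Hx); zring.
have h2 : br (y.1 u) (x.2 a + x.1 a) = 0 by rewrite brDr (Qann Hx); zring.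
have : br u (y.1 (x.2 a + x.1 a)) = 0 by rewrite (Q1 Hy) h1 h2 (lin0 (Q1l Hy)); zring.
rewrite (linD _ _ (Q1l Hy)) brDr => h; apply/eqP; rewrite -subr_eq0 opprK h //.
Qed.

Lemma Q_br x y : Qp x -> Qp y -> Qp (pair_br x y).
Proof.
move=> Hx Hy.
have X1 := Q1l Hx; have X2 := Q2l Hx; have Y1 := Q1l Hy; have Y2 := Q2l Hy.
split => /=.
- move=> c u v; rewrite ?(X1, Y1, (linD _ _ X1), (linZ _ _ X1), (linD _ _ Y1), (linZ _ _ Y1)); zring.
- move=> c u v; rewrite ?(Y2, X2, (linD _ _ Y1), (linZ _ _ Y1), (linD _ _ X2), (linZ _ _ X2)); zring.
- move=> a1 a2.
  rewrite !(brDr, brNr, brDl, brNl, (linD _ _ X1), (linD _ _ Y1), (linN _ X1), (linN _ Y1), (linB _ _ X1), (linB _ _ Y1), (Q1' Hx), (Q1' Hy)); zring.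
- move=> u a; rewrite !brDr brNr (Lann2 Hx Hy) (Qann Hx) (Lann2 Hy Hx); zring.
- move=> a1 a2.
  rewrite !(brDr, brNr, brDl, brNl, (linD _ _ X1), (linD _ _ Y1), (linN _ X1), (linN _ Y1),
    (linD _ _ X2), (linD _ _ Y2), (linN _ X2), (linN _ Y2), (Q1' Hx), (Q1' Hy), (Q3 Hx), (Q3 Hy), (Qann Hx), (Qann Hy)); zring.
Qed.

Lemma Q_inBA x : inBA x -> Qp x.
Proof.
elim=> {x} [B lB rB b H | x y _ Hx _ Hy | c x _ Hx | x y _ Hx _ Hy].
- exact: Q_gen.
- exact: Q_add.
- exact: Q_scale.
- exact: Q_br.
Qed.

Lemma self_action : is_action (lbr A) (lbr A).
Proof.
split.
- split => [c x y z | c x y z]; [exact: lbr_linl | exact: lbr_linr].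
- split => [c x y z | c x y z]; [exact: lbr_linl | exact: lbr_linr].
- by move=> a1 a2 b; rewrite brL.
- by move=> a1 a2 b; rewrite brL.
split.
- by move=> b a1 a2; rewrite brL.
- by move=> a b1 b2; rewrite brL.
- by move=> b1 b2 a; rewrite brL.
- by move=> b1 b2 a; rewrite !brL; zring.
Qed.

Definition killed (w : A) := forall (C : leibAlg k) (lC : C -> A -> A) rC,
  is_action lC rC -> forall c, lC c w = 0.

Lemma lC_lin (C : leibAlg k) (lC : C -> A -> A) rC c :
  is_action lC rC -> lin (lC c).
Proof. by case=> [[_ h] _ _ _ _] d u v; rewrite h. Qed.

Lemma killed0 : killed 0.
Proof. by move=> C lC rC H c; rewrite (lin0 (lC_lin c H)). Qed.
Lemma killedD u v : killed u -> killed v -> killed (u + v).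
Proof. by move=> hu hv C lC rC H c; rewrite (linD _ _ (lC_lin c H)) (hu _ _ _ H) (hv _ _ _ H) addr0. Qed.
Lemma killedN u : killed u -> killed (- u).
Proof. by move=> hu C lC rC H c; rewrite (linN _ (lC_lin c H)) (hu _ _ _ H) oppr0. Qed.
Lemma killedZ d u : killed u -> killed (d *: u).
Proof. by move=> hu C lC rC H c; rewrite (linZ _ _ (lC_lin c H)) (hu _ _ _ H) scaler0. Qed.

Lemma killed_Z w x : killed w -> inBA x -> x.2 w = 0.
Proof.
move=> Kw; elim=> {x} [B lB rB b H | x y Ix Hx Iy Hy | c x _ Hx | x y Ix Hx Iy Hy] /=.
- exact: (Kw _ _ _ H).
- by rewrite Hx Hy addr0.
- by rewrite Hx scaler0.
- by rewrite Hy Hx (lin0 (Q2l (Q_inBA Ix))) (lin0 (Q1l (Q_inBA Iy))) addr0.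
Qed.

Hypothesis cond1 : condition1 A.

Lemma killed_w y : inBA y -> forall a, killed (y.2 a + y.1 a).
Proof.
elim=> {y} [B lB rB b H | x y Ix Hx Iy Hy | c x _ Hx | x y Ix Hx Iy Hy] a /=.
- move=> C lC rC HC c; rewrite (linD _ _ (lC_lin c HC)) (cond1 H HC); zring.
- have -> : x.2 a + y.2 a + (x.1 a + y.1 a) = (x.2 a + x.1 a) + (y.2 a + y.1 a) by zring.
  exact: killedD.
- have -> : c *: x.2 a + c *: x.1 a = c *: (x.2 a + x.1 a) by zring.
  exact: killedZ.
- have QX := Q_inBA Ix; have QY := Q_inBA Iy.
  have -> : x.2 (y.2 a) + y.1 (x.2 a) + (y.1 (x.1 a) - x.1 (y.1 a)) =
     x.2 (y.2 a + y.1 a) + (y.2 (x.2 a + x.1 a) + y.1 (x.2 a + x.1 a))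
     - y.2 (x.2 a + x.1 a) - (x.2 (y.1 a) + x.1 (y.1 a)).
    rewrite !(linD _ _ (Q1l QX), linD _ _ (Q2l QX), linD _ _ (Q1l QY), linD _ _ (Q2l QY)); zring.
  rewrite (killed_Z (Hy a) Ix) (killed_Z (Hx a) Iy) add0r subr0.
  have h := killedD (Hy (x.2 a + x.1 a)) (killedN (Hx (y.1 a))).
  by rewrite (killed_Z (Hx a) Iy) add0r in h; rewrite add0r.
Qed.

Lemma P_BA (x y : pairA A) : inBA x -> inBA y -> forall a, x.2 (y.2 a + y.1 a) = 0.
Proof. by move=> Ix Iy a; apply: killed_Z => //; apply: killed_w. Qed.

Lemma P_BA' (x y : pairA A) : inBA x -> inBA y -> forall a, x.2 (y.1 a) = - x.2 (y.2 a).
Proof.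
move=> Ix Iy a; have := P_BA Ix Iy a; rewrite (linD _ _ (Q2l (Q_inBA Ix))) => h.
by apply/eqP; rewrite -subr_eq0 opprK addrC h.
Qed.

End Main.

Section BAsec.
Variables (k : comPzRingType) (A : leibAlg k).
Local Notation br := (lbr A).

Lemma pair_ext (p q : pairA A) :
  (forall a, p.1 a = q.1 a) -> (forall a, p.2 a = q.2 a) -> p = q.
Proof. case: p q => [p1 p2] [q1 q2] /= h1 h2. by rewrite (funext h1) (funext h2). Qed.

Record BA := MkBA { bval : pairA A; bin : inBA bval }.

Lemma BA_eq (x y : BA) : bval x = bval y -> x = y.
Proof. case: x y => [x hx] [y hy] /= e; subst y; congr MkBA; apply: proof_irrelevance. Qed.

Lemma in_zero : inBA ((fun _ => 0, fun _ => 0) : pairA A).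
Proof.
have -> : ((fun _ => 0, fun _ => 0) : pairA A) = pair_scale 0 (bold (lbr A) (lbr A) 0).
  by apply: pair_ext => a /=; rewrite scale0r.
by apply: inBA_scale; apply: inBA_gen; exact: self_action.
Qed.

Lemma in_opp (p : pairA A) : inBA p -> inBA ((fun a => - p.1 a, fun a => - p.2 a) : pairA A).
Proof.
move=> h; have -> : ((fun a => - p.1 a, fun a => - p.2 a) : pairA A) = pair_scale (-1) p.
  by apply: pair_ext => a /=; rewrite scaleN1r.
exact: inBA_scale.
Qed.

Definition BA0 : BA := MkBA in_zero.
Definition BAopp (x : BA) : BA := MkBA (in_opp (bin x)).
Definition BAadd (x y : BA) : BA := MkBA (inBA_add (bin x) (bin y)).
Definition BAscale (c : k) (x : BA) : BA := MkBA (inBA_scale c (bin x)).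

Lemma BAaddA : associative BAadd.
Proof. by move=> x y z; apply: BA_eq; apply: pair_ext => a /=; rewrite addrA. Qed.
Lemma BAaddC : commutative BAadd.
Proof. by move=> x y; apply: BA_eq; apply: pair_ext => a /=; rewrite addrC. Qed.
Lemma BAadd0 : left_id BA0 BAadd.
Proof. by move=> x; apply: BA_eq; apply: pair_ext => a /=; rewrite add0r. Qed.
Lemma BAaddN : left_inverse BA0 BAopp BAadd.
Proof. by move=> x; apply: BA_eq; apply: pair_ext => a /=; rewrite addNr. Qed.

HB.instance Definition _ := gen_eqMixin BA.
HB.instance Definition _ := gen_choiceMixin BA.
HB.instance Definition _ := GRing.isZmodule.Build BA BAaddA BAaddC BAadd0 BAaddN.

Lemma BAscaleA a b v : BAscale a (BAscale b v) = BAscale (a * b) v.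
Proof. by apply: BA_eq; apply: pair_ext => u /=; rewrite scalerA. Qed.
Lemma BAscale1 : left_id 1 BAscale.
Proof. by move=> x; apply: BA_eq; apply: pair_ext => u /=; rewrite scale1r. Qed.
Lemma BAscaleDr : right_distributive BAscale +%R.
Proof. by move=> c x y; apply: BA_eq; apply: pair_ext => u /=; rewrite scalerDr. Qed.
Lemma BAscaleDl v : {morph BAscale^~ v : a b / a + b}.
Proof. by move=> a b; apply: BA_eq; apply: pair_ext => u /=; rewrite scalerDl. Qed.

HB.instance Definition _ := GRing.Zmodule_isLmodule.Build k BA BAscaleA BAscale1 BAscaleDr BAscaleDl.

Lemma bvalD (x y : BA) : bval (x + y) = pair_add (bval x) (bval y). Proof. by []. Qed.
Lemma bvalZ c (x : BA) : bval (c *: x) = pair_scale c (bval x). Proof. by []. Qed.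
Lemma bvalN (x : BA) : bval (- x) = ((fun a => - (bval x).1 a, fun a => - (bval x).2 a) : pairA A).
Proof. by []. Qed.

End BAsec.

Section BAalgSec.
Variables (k : comPzRingType) (A : leibAlg k).
Local Notation br := (lbr A).

Lemma bold_lin (B : leibAlg k) (lB : B -> A -> A) rB (H : is_action lB rB) c b1 b2 :
  bold lB rB (c *: b1 + b2) = pair_add (pair_scale c (bold lB rB b1)) (bold lB rB b2).
Proof.
case: H => [[l1 _] [_ r2] _ _ _]; apply: pair_ext => a /=; [exact: r2 | exact: l1].
Qed.

Lemma bold_br (B : leibAlg k) (lB : B -> A -> A) rB (H : is_action lB rB) b1 b2 :
  bold lB rB (lbr B b1 b2) = pair_br (bold lB rB b1) (bold lB rB b2).
Proof.
case: H => [_ _ _ _ [_ ax4 _ ax6]]; apply: pair_ext => a /=; first exact: ax4.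
rewrite ax6; zring.
Qed.

Hypothesis cond1 : condition1 A.

Definition brBA (x y : BA A) : BA A := MkBA (inBA_br (bin x) (bin y)).

Lemma brBA_linl (c : k) (x y z : BA A) : brBA (c *: x + y) z = c *: brBA x z + brBA y z.
Proof.
apply: BA_eq; have QZ := Q_inBA (bin z); apply: pair_ext => a /=.
  rewrite (Q1l QZ); zring.
rewrite (Q1l QZ); zring.
Qed.

Lemma brBA_linr (c : k) (x y z : BA A) : brBA z (c *: x + y) = c *: brBA z x + brBA z y.
Proof.
apply: BA_eq; have QZ := Q_inBA (bin z); apply: pair_ext => a /=.
  rewrite (Q1l QZ); zring.
rewrite (Q2l QZ); zring.
Qed.

Lemma brBA_leib (x y z : BA A) : brBA x (brBA y z) = brBA (brBA x y) z - brBA (brBA x z) y.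
Proof.
apply: BA_eq; have QX := Q_inBA (bin x); have QY := Q_inBA (bin y); have QZ := Q_inBA (bin z).
apply: pair_ext => a /=.
  rewrite !(linB _ _ (Q1l QX), linB _ _ (Q1l QY), linB _ _ (Q1l QZ)); zring.
rewrite !(linD _ _ (Q2l QX), linD _ _ (Q1l QY), linD _ _ (Q1l QZ), linB _ _ (Q1l QZ), linB _ _ (Q1l QY)).
rewrite (P_BA' cond1 (bin x) (bin z)); zring.
Qed.

Definition BAalg : leibAlg k := @LeibAlg k _ brBA brBA_linl brBA_linr brBA_leib.

Definition lBA (x : BAalg) (a : A) : A := (bval x).2 a.
Definition rBA (a : A) (x : BAalg) : A := (bval x).1 a.
Definition dBA (a : A) : BAalg := MkBA (@inBA_gen k A A (lbr A) (lbr A) a (self_action A)).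

Lemma BA_action : is_action lBA rBA.
Proof.
split.
- split => [c x y a | c x a1 a2] //=; exact: (Q2l (Q_inBA (bin x))).
- split => [c a1 a2 x | c a x y] //=; exact: (Q1l (Q_inBA (bin x))).
- move=> a1 a2 x; exact: (Q1 (Q_inBA (bin x))).
- move=> a1 a2 x; exact: (Q2 (Q_inBA (bin x))).
split.
- move=> x a1 a2; exact: (Q3 (Q_inBA (bin x))).
- by [].
- move=> x y a; rewrite /lBA /rBA /= (P_BA' cond1 (bin x) (bin y)); zring.
- move=> x y a; rewrite /lBA /rBA /=; zring.
Qed.

Lemma BA_actor : is_actor lBA rBA dBA.
Proof.
split.
  split.
  - split.
    + move=> c x y; apply: BA_eq; exact: (bold_lin (self_action A)).
    + move=> x y; apply: BA_eq; exact: (bold_br (self_action A)).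
  - exact: BA_action.
  - move=> x a; apply: BA_eq; have QX := Q_inBA (bin x); apply: pair_ext => a' /=.
      exact: (Q2 QX).
    rewrite (Q3 QX); zring.
  split.
  - move=> x a; apply: BA_eq; have QX := Q_inBA (bin x); apply: pair_ext => a' /=.
      exact: (Q1 QX).
    rewrite (Qann QX) (Q1' QX); zring.
  - by [].
  - by [].
move=> C lC rC H.
exists (fun c => (MkBA (@inBA_gen k A C lC rC c H) : BAalg)).
split.
- split.
  + move=> c x y; apply: BA_eq; exact: (bold_lin H).
  + move=> x y; apply: BA_eq; exact: (bold_br H).
- by [].
- by [].
- move=> psi _ Hl Hr c; apply: BA_eq; apply: pair_ext => a /=.
    exact: Hr.
  exact: Hl.
Qed.

End BAalgSec.

Lemma hom_id (k : comPzRingType) (L : leibAlg k) : is_leib_hom (fun x : L => x).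
Proof. by split. Qed.

Lemma hom_comp (k : comPzRingType) (L M N : leibAlg k) (f : L -> M) (g : M -> N) :
  is_leib_hom f -> is_leib_hom g -> is_leib_hom (fun x => g (f x)).
Proof.
move=> [f1 f2] [g1 g2]; split.
- by move=> c x y; rewrite f1 g1.
- by move=> x y; rewrite f2 g2.
Qed.

Theorem theorem4p5 (k : comPzRingType) (A : leibAlg k) :
  (has_actor A <-> condition1 A) /\
  (condition1 A ->
   forall (G : leibAlg k) (lG : G -> A -> A) (rG : A -> G -> A) (d : A -> G),
     is_actor lG rG d -> actor_is_BA lG rG d).
Proof.
split.
  split.
    move=> [G [lG [rG [d [[_ HG _ _] Hu]]]]] B C lB rB lC rC HB HC a b c.
    have [phB [_ lB' rB' _]] := Hu B lB rB HB.
    have [phC [_ lC' rC' _]] := Hu C lC rC HC.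
    rewrite -!lC' -rB' -lB'.
    case: HG => [_ _ _ _ [_ _ ax5 ax6]]; rewrite ax5 ax6; zring.
  move=> H1; exists (BAalg H1), (@lBA k A H1), (@rBA k A H1), (@dBA k A H1).
  exact: BA_actor.
move=> H1 G lG rG d [[Hd HG Ha [Hb Hc Hc']] Hu].
have [psi [psihom psil psir _]] := Hu (BAalg H1) (@lBA k A H1) (@rBA k A H1) (@BA_action k A H1).
have [phi0 [_ _ _ uniq]] := Hu G lG rG HG.
have idg : forall g, g = phi0 g by apply: uniq => //; exact: hom_id.
pose phi (g : G) : BAalg H1 := MkBA (@inBA_gen k A G lG rG g HG).
have phihom : is_leib_hom phi.
  split.
  + move=> c x y; apply: BA_eq; exact: (bold_lin HG).
  + move=> x y; apply: BA_eq; exact: (bold_br HG).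
have psiphi : forall g, psi (phi g) = g.
  move=> g; rewrite [RHS]idg; apply: (uniq (fun g => psi (phi g))).
  - exact: hom_comp phihom psihom.
  - by move=> c a; rewrite psil.
  - by move=> c a; rewrite psir.
have iota_psi : forall x : BAalg H1, bold lG rG (psi x) = bval x.
  by move=> x; apply: pair_ext => a /=; [rewrite psir | rewrite psil].
split.
- move=> g h e.
  have e' : phi g = phi h by apply: BA_eq.
  by rewrite -(psiphi g) -(psiphi h) e'.
- move=> x; split.
    by move=> Hx; exists (psi (MkBA Hx : BAalg H1)); rewrite iota_psi.
  by move=> [g <-]; apply: inBA_gen.
- move=> c g h; exact: (bold_lin HG).
- move=> g h; exact: (bold_br HG).
- move=> a; apply: pair_ext => a' /=; [exact: Hc' | exact: Hc].
Qed.
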